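(* Let $D=((a_n),(b_n))$ be an almost periodic divisor. Then there is $C_0<\infty$ such that ${\rm card}\{n:|a_n-c|\le1\}+{\rm card}\{n:|b_n-c|\le1\}<C_0$ for all $c\in\mathbb{C}$. If moreover $D$ is almost periodic with a regular indexing, then $\sup_n|a_n-b_n|<\infty$.
   Context: A divisor $D=((a_n)_{n\in\mathbb{N}},(b_n)_{n\in\mathbb{N}})$ consists of two sequences in $\mathbb{C}$ (repetitions allowed) without finite accumulation points. $\tau$ is an $\varepsilon$-almost period of $D$ if there are bijections $\sigma,\sigma':\mathbb{N}\to\mathbb{N}$ with $|a_n+\tau-a_{\sigma(n)}|<\varepsilon$ and $|b_n+\tau-b_{\sigma'(n)}|<\varepsilon$ for all $n$. $D$ is almost periodic if for every $\varepsilon>0$ there is $L$ such that every disc of radius $L$ contains an $\varepsilon$-almost period; it is almost periodic with a regular indexing if in addition these $\varepsilon$-almost periods can be chosen so that $\sigma=\sigma'$. *)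

(* Defs.v *)
From Stdlib Require Import Reals Lra List.
Open Scope R_scope.

Definition Cpx := (R * R)%type.
Definition Cadd (z w : Cpx) : Cpx := (fst z + fst w, snd z + snd w).
Definition Csub (z w : Cpx) : Cpx := (fst z - fst w, snd z - snd w).
Definition Cnorm (z : Cpx) : R := sqrt (fst z * fst z + snd z * snd z).
Definition Cdist (z w : Cpx) : R := Cnorm (Csub z w).

(* A sequence without finite accumulation points: every closed disc contains
   only finitely many terms (counted with multiplicity, i.e. finitely many indices). *)
Definition no_finite_accumulation (a : nat -> Cpx) : Prop :=
  forall (c : Cpx) (r : R), exists N : nat, forall n : nat, Cdist (a n) c <= r -> (n < N)%nat.

Record divisor := mkDivisor {
  div_a : nat -> Cpx;
  div_b : nat -> Cpx;
  div_a_discrete : no_finite_accumulation div_a;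
  div_b_discrete : no_finite_accumulation div_b
}.

Definition bijective_nat (s : nat -> nat) : Prop :=
  exists t : nat -> nat, (forall n, t (s n) = n) /\ (forall n, s (t n) = n).

Definition almost_period (a b : nat -> Cpx) (eps : R) (tau : Cpx) : Prop :=
  exists s s' : nat -> nat, bijective_nat s /\ bijective_nat s' /\
    (forall n, Cdist (Cadd (a n) tau) (a (s n)) < eps) /\
    (forall n, Cdist (Cadd (b n) tau) (b (s' n)) < eps).

Definition almost_period_regular (a b : nat -> Cpx) (eps : R) (tau : Cpx) : Prop :=
  exists s : nat -> nat, bijective_nat s /\
    (forall n, Cdist (Cadd (a n) tau) (a (s n)) < eps) /\
    (forall n, Cdist (Cadd (b n) tau) (b (s n)) < eps).

Definition almost_periodic (D : divisor) : Prop :=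
  forall eps : R, 0 < eps -> exists L : R, 0 < L /\
    forall z : Cpx, exists tau : Cpx, Cdist tau z < L /\
      almost_period (div_a D) (div_b D) eps tau.

Definition almost_periodic_regular (D : divisor) : Prop :=
  forall eps : R, 0 < eps -> exists L : R, 0 < L /\
    forall z : Cpx, exists tau : Cpx, Cdist tau z < L /\
      almost_period_regular (div_a D) (div_b D) eps tau.

Definition card_nat (P : nat -> Prop) (k : nat) : Prop :=
  exists l : list nat, NoDup l /\ (forall n, In n l <-> P n) /\ length l = k.

(* Main.v *)
Require Import Defs.
From Stdlib Require Import Reals List Lra Lia Psatz FinFun.
Open Scope R_scope.

Lemma sq_le (u v : R) : 0 <= u -> u * u <= v -> u <= sqrt v.
Proof. intros Hu H. rewrite <- (sqrt_square u Hu). apply sqrt_le_1_alt. exact H. Qed.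

Lemma tri (x1 y1 x2 y2 : R) :
  sqrt ((x1+x2)*(x1+x2) + (y1+y2)*(y1+y2)) <=
  sqrt (x1*x1+y1*y1) + sqrt (x2*x2+y2*y2).
Proof.
  set (B := x1*x1+y1*y1). set (C := x2*x2+y2*y2).
  assert (HB : 0 <= B) by (unfold B; nra).
  assert (HC : 0 <= C) by (unfold C; nra).
  assert (Hs : 0 <= sqrt B + sqrt C) by (pose proof (sqrt_pos B); pose proof (sqrt_pos C); lra).
  rewrite <- (sqrt_square _ Hs). apply sqrt_le_1_alt.
  assert (E : (sqrt B + sqrt C) * (sqrt B + sqrt C) = B + C + 2 * sqrt (B*C)).
  { rewrite sqrt_mult by assumption.
    replace ((sqrt B + sqrt C) * (sqrt B + sqrt C)) with
      (sqrt B * sqrt B + sqrt C * sqrt C + 2 * (sqrt B * sqrt C)) by ring.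
    rewrite !sqrt_sqrt by assumption. ring. }
  rewrite E.
  assert (K : x1*x2+y1*y2 <= sqrt (B*C)).
  { destruct (Rle_dec (x1*x2+y1*y2) 0) as [h|h].
    - pose proof (sqrt_pos (B*C)); lra.
    - apply sq_le; [lra|]. unfold B, C.
      pose proof (Rle_0_sqr (x1*y2 - x2*y1)). unfold Rsqr in *. nra. }
  unfold B, C in *. nra.
Qed.

Definition O0 : Cpx := (0,0).

Lemma Cdist_tri p q r : Cdist p r <= Cdist p q + Cdist q r.
Proof.
  destruct p as [p1 p2], q as [q1 q2], r as [r1 r2].
  unfold Cdist, Cnorm, Csub; simpl.
  replace (p1 - r1) with ((p1-q1)+(q1-r1)) by ring.
  replace (p2 - r2) with ((p2-q2)+(q2-r2)) by ring.
  apply tri.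
Qed.

Lemma Cdist_sym p q : Cdist p q = Cdist q p.
Proof.
  destruct p as [p1 p2], q as [q1 q2]. unfold Cdist, Cnorm, Csub; simpl. f_equal; ring.
Qed.

Lemma Cdist_pos p q : 0 <= Cdist p q.
Proof. apply sqrt_pos. Qed.

Lemma shift1 p t : Cdist p O0 = Cdist (Cadd p t) t.
Proof.
  destruct p as [p1 p2], t as [t1 t2]. unfold Cdist, Cnorm, Csub, Cadd, O0; simpl. f_equal; ring.
Qed.

Lemma shift2 p t : Cdist (Cadd p t) O0 = Cdist t (Csub O0 p).
Proof.
  destruct p as [p1 p2], t as [t1 t2]. unfold Cdist, Cnorm, Csub, Cadd, O0; simpl. f_equal; ring.
Qed.

Lemma shift3 p q t : Cdist p q = Cdist (Cadd p t) (Cadd q t).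
Proof.
  destruct p as [p1 p2], q as [q1 q2], t as [t1 t2].
  unfold Cdist, Cnorm, Csub, Cadd; simpl. f_equal; ring.
Qed.

Lemma count_le (P : nat -> Prop) (t : nat -> nat) (s : nat -> nat) (N k : nat) :
  (forall n, s (t n) = n) -> (forall m, P m -> (t m < N)%nat) ->
  card_nat P k -> (k <= N)%nat.
Proof.
  intros Hst HP [l [Hnd [Hin Hlen]]]. subst k.
  rewrite <- (map_length t l). rewrite <- (seq_length N 0).
  apply NoDup_incl_length.
  - apply Injective_map_NoDup; [|exact Hnd].
    intros x y Hxy. rewrite <- (Hst x), <- (Hst y), Hxy. reflexivity.
  - intros y Hy. apply in_map_iff in Hy. destruct Hy as [x [<- Hx]].
    apply in_seq. apply Hin in Hx. specialize (HP x Hx). lia.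
Qed.

Fixpoint Ssum (f : nat -> R) (N : nat) : R :=
  match N with O => 0 | S n => Ssum f n + f n end.

Lemma Ssum_pos f N : (forall k, 0 <= f k) -> 0 <= Ssum f N.
Proof. intros H; induction N; simpl; [lra|]. pose proof (H N); lra. Qed.

Lemma Ssum_ge f N k : (forall k, 0 <= f k) -> (k < N)%nat -> f k <= Ssum f N.
Proof.
  intros H; induction N; intros Hk; [lia|]. simpl.
  destruct (Nat.eq_dec k N) as [->|Hne].
  - pose proof (Ssum_pos f N H); lra.
  - pose proof (IHN ltac:(lia)). pose proof (H N). lra.
Qed.

Theorem mainTheorem9 (D : divisor) :
  almost_periodic D ->
  (exists C0 : R,
     forall (c : Cpx) (ka kb : nat),
       card_nat (fun n => Cdist (div_a D n) c <= 1) ka ->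
       card_nat (fun n => Cdist (div_b D n) c <= 1) kb ->
       INR (ka + kb) < C0)
  /\
  (almost_periodic_regular D ->
     exists M : R, forall n : nat, Cdist (div_a D n) (div_b D n) <= M).
Proof.
  intros HAP. split.
  - destruct (HAP 1 ltac:(lra)) as [L [HL HLz]].
    destruct (div_a_discrete D O0 (L+2)) as [Na HNa].
    destruct (div_b_discrete D O0 (L+2)) as [Nb HNb].
    exists (INR (Na + Nb) + 1). intros c ka kb Hka Hkb.
    destruct (HLz c) as [tau [Htau [s [s' [[t [Hts Hst]] [[t' [Hts' Hst']] [Ha Hb]]]]]]].
    assert (ka <= Na)%nat.
    { apply (count_le (fun n => Cdist (div_a D n) c <= 1) t s Na ka Hst); [|exact Hka].
      intros m Hm. apply HNa. rewrite (shift1 _ tau).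
      pose proof (Cdist_tri (Cadd (div_a D (t m)) tau) (div_a D m) tau) as T1.
      pose proof (Cdist_tri (div_a D m) c tau) as T2.
      pose proof (Ha (t m)) as T3. rewrite Hst in T3.
      rewrite (Cdist_sym c tau) in T2. simpl in Hm. lra. }
    assert (kb <= Nb)%nat.
    { apply (count_le (fun n => Cdist (div_b D n) c <= 1) t' s' Nb kb Hst'); [|exact Hkb].
      intros m Hm. apply HNb. rewrite (shift1 _ tau).
      pose proof (Cdist_tri (Cadd (div_b D (t' m)) tau) (div_b D m) tau) as T1.
      pose proof (Cdist_tri (div_b D m) c tau) as T2.
      pose proof (Hb (t' m)) as T3. rewrite Hst' in T3.
      rewrite (Cdist_sym c tau) in T2. simpl in Hm. lra. }
    apply Rle_lt_trans with (INR (Na + Nb)); [apply le_INR; lia | lra].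
  - intros HR.
    destruct (HR 1 ltac:(lra)) as [L [HL HLz]].
    destruct (div_a_discrete D O0 (L+1)) as [Na HNa].
    set (f := fun k => Cdist (div_a D k) (div_b D k)).
    exists (Ssum f Na + 2). intros n.
    destruct (HLz (Csub O0 (div_a D n))) as [tau [Htau [s [_ [Ha Hb]]]]].
    assert (Hsn : (s n < Na)%nat).
    { apply HNa.
      pose proof (Cdist_tri (div_a D (s n)) (Cadd (div_a D n) tau) O0) as T1.
      rewrite shift2 in T1. pose proof (Ha n) as T2.
      rewrite Cdist_sym in T2. lra. }
    assert (Hf : f (s n) <= Ssum f Na)
      by (apply Ssum_ge; [intros; apply Cdist_pos | exact Hsn]).
    unfold f in Hf; cbv beta in Hf.
    rewrite (shift3 _ _ tau).
    pose proof (Cdist_tri (Cadd (div_a D n) tau) (div_a D (s n)) (Cadd (div_b D n) tau)) as T1.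
    pose proof (Cdist_tri (div_a D (s n)) (div_b D (s n)) (Cadd (div_b D n) tau)) as T2.
    pose proof (Ha n) as T3. pose proof (Hb n) as T4.
    rewrite Cdist_sym in T4. unfold f. lra.
Qed.
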